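(* Let $p$ be a prime, $e\ge1$, $G$ a finite abelian group of order $p^e$, and $q\neq p$ a prime. Let $\psi^q\colon\mathbf{Z}[G]\to\mathbf{Z}[G]$ be the ring homomorphism with $\psi^q(g)=g^q$, and $f_q(t)=\frac{1-t^q}{1-t}$. If $\rho$ is a representation of level $k>0$, then $\psi^q(b_\rho)=f_q(y_\rho)\,b_\rho$; moreover $\psi^q(b_1)=b_1$.
   Context: A representation is a group homomorphism $\rho\colon G\to\mathbf{C}^*$; its level is $k$ if $\rho(G)$ has $p^k$ elements. Write $\omega=\exp(2\pi i/p)$. For $\rho$ of level $k>0$, $b_\rho=\sum_{x\in G,\ \rho(x)=1}x-\sum_{\xi\in G,\ \rho(\xi)=\omega}\xi$ and $y_\rho\in G$ is a fixed element with $\rho(y_\rho)=\omega$; $b_1=\sum_{x\in G}x$. *)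

(* Defs.v *)
From mathcomp Require Import all_boot all_algebra all_fingroup.
From mathcomp Require Import complex.
From mathcomp Require Import reals trigo.
Set Implicit Arguments. Unset Strict Implicit. Unset Printing Implicit Defensive.
Import GRing.Theory Num.Theory.
Local Open Scope ring_scope.

(* The group ring Z[G] for a finite group gT (G = the whole of gT),
   represented by coefficient functions gT -> int. *)
Notation grpring gT := {ffun gT -> int}.

Definition gdelta (gT : finGroupType) (g : gT) : grpring gT :=
  [ffun x => ((x == g) : nat)%:Z].

Definition gmul (gT : finGroupType) (a b : grpring gT) : grpring gT :=
  [ffun x => \sum_(g : gT) a g * b (g^-1 * x)%g].

Definition psi (gT : finGroupType) (q : nat) (a : grpring gT) : grpring gT :=
  [ffun x => \sum_(g : gT) a g * gdelta (g ^+ q)%g x].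

(* f_q(t) = (1 - t^q)/(1 - t) = 1 + t + ... + t^(q-1), evaluated at y *)
Definition fq (gT : finGroupType) (q : nat) (y : gT) : grpring gT :=
  \sum_(i < q) gdelta (y ^+ i)%g.

Definition omega (R : realType) (p : nat) : R[i] :=
  ((cos (2 * pi / p%:R))%:C + 'i * (sin (2 * pi / p%:R))%:C)%C.

Definition is_rep (R : realType) (gT : finGroupType) (rho : gT -> R[i]) : Prop :=
  (forall x y : gT, rho (x * y)%g = rho x * rho y) /\ (forall x, rho x != 0).

(* rho has level k : rho(G) has p^k elements (number of distinct values) *)
Definition level (R : realType) (gT : finGroupType) (rho : gT -> R[i]) (p k : nat) : Prop :=
  size (undup [seq rho x | x <- enum gT]) = (p ^ k)%N.

Definition b_rho (R : realType) (gT : finGroupType) (p : nat) (rho : gT -> R[i])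
  : grpring gT :=
  \sum_(x : gT | rho x == 1) gdelta x - \sum_(xi : gT | rho xi == omega R p) gdelta xi.

Definition b_1 (gT : finGroupType) : grpring gT := \sum_(x : gT) gdelta x.

(* Main.v *)
Require Import Defs.
From mathcomp Require Import all_boot all_algebra all_fingroup all_solvable.
From mathcomp Require Import complex.
From mathcomp Require Import reals trigo.
Import GRing.Theory Num.Theory.
Local Open Scope ring_scope.

Lemma sum_gdelta_at (gT : finGroupType) (P : pred gT) (x : gT) :
  (\sum_(z | P z) gdelta z) x = (P x : nat)%:Z.
Proof.
rewrite sum_ffunE.
under eq_bigr => z _ do rewrite ffunE.
case Px: (P x).
  rewrite (bigD1 x) //= eqxx big1 ?addr0 // => z /andP[_ nz].
  by rewrite eq_sym (negbTE nz).
by rewrite big1 // => z Pz; case: eqP => // exz; rewrite exz Pz in Px.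
Qed.

Lemma psi_at (gT : finGroupType) (q : nat) (a : grpring gT) (x : gT) :
  coprime #|gT| q ->
  psi q a x = a (x ^+ expg_invn [set: gT] q)%g.
Proof.
move=> cq.
have cq' : coprime #|[set: gT]%G| q by rewrite cardsT.
set m := expg_invn _ q.
have K1 (u : gT) : ((u ^+ q) ^+ m)%g = u by apply: (expgK cq'); rewrite inE.
have K2 (u : gT) : ((u ^+ m) ^+ q)%g = u by rewrite expgnAC K1.
rewrite ffunE (bigD1 (x ^+ m)%g) //= ffunE K2 eqxx mulr1 big1 ?addr0 // => g ng.
rewrite ffunE; case: eqP; rewrite ?mulr0 // => exg.
by rewrite exg K1 eqxx in ng.
Qed.


Lemma rho1 {R : realType} {gT : finGroupType} {rho : gT -> R[i]} (hr : is_rep rho) : rho 1%g = 1.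
Proof.
case: hr => hm hn; apply: (mulIf (hn 1%g)).
by rewrite mul1r -hm mulg1.
Qed.

Lemma rhoX {R : realType} {gT : finGroupType} {rho : gT -> R[i]} (hr : is_rep rho) (u : gT) n : rho (u ^+ n)%g = rho u ^+ n.
Proof.
elim: n => [|n IH]; first by rewrite expg0 (rho1 hr).
by rewrite expgS hr.1 IH exprS.
Qed.

Lemma rho_keyeq {R : realType} {gT : finGroupType} {rho : gT -> R[i]} (hr : is_rep rho) q (u w : gT) : coprime #|gT| q ->
  (rho u == rho w) = (rho (u ^+ q)%g == rho (w ^+ q)%g).
Proof.
move=> cq.
have cq' : coprime #|[set: gT]%G| q by rewrite cardsT.
set m := expg_invn [set: gT] q.
have K1 (v : gT) : ((v ^+ q) ^+ m)%g = v by apply: (expgK cq'); rewrite inE.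
apply/eqP/eqP => [e|e]; first by rewrite !(rhoX hr) e.
by rewrite -(K1 u) -(K1 w) !(rhoX hr (_ ^+ q)%g) e.
Qed.


Lemma b_rho_at (R : realType) (gT : finGroupType) p (rho : gT -> R[i]) x :
  b_rho p rho x = (rho x == 1 : nat)%:Z - (rho x == omega R p : nat)%:Z.
Proof. by rewrite /b_rho !ffunE !sum_gdelta_at. Qed.

Lemma gmul_fq_at (gT : finGroupType) q (y : gT) (b : grpring gT) x :
  gmul (fq q y) b x = \sum_(i < q) b ((y ^+ i)^-1 * x)%g.
Proof.
rewrite ffunE.
under eq_bigr => g _ do rewrite /fq sum_ffunE mulr_suml.
rewrite exchange_big /=; apply: eq_bigr => i _.
rewrite (bigD1 (y ^+ i)%g) //= ffunE eqxx mul1r big1 ?addr0 // => g ng.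
by rewrite ffunE (negbTE ng) mul0r.
Qed.

Theorem mainTheorem7 (R : realType) (gT : finGroupType) (p e q : nat) :
  prime p -> (1 <= e)%N -> abelian [set: gT] -> #|gT| = (p ^ e)%N ->
  prime q -> q != p ->
  (forall (rho : gT -> R[i]) (k : nat) (y : gT),
      is_rep rho -> level rho p k -> (0 < k)%N -> rho y = omega R p ->
      psi q (b_rho p rho) = gmul (fq q y) (b_rho p rho))
  /\ psi q (b_1 gT) = b_1 gT.
Proof.
move=> pp e1 _ cardG pq qp.
have cq : coprime #|gT| q.
  by rewrite cardG coprimeXl // prime_coprime // dvdn_prime2 // eq_sym.
split; last first.
  apply/ffunP => x; rewrite psi_at // /b_1 !sum_gdelta_at //.
move=> rho k y hr _ _ ry.
apply/ffunP => x; rewrite psi_at // gmul_fq_at b_rho_at.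
set m := expg_invn [set: gT] q.
have cq' : coprime #|[set: gT]%G| q by rewrite cardsT.
have K2 (v : gT) : ((v ^+ m) ^+ q)%g = v.
  by rewrite expgnAC; apply: (expgK cq'); rewrite inE.
rewrite -(rho1 hr) -ry (rho_keyeq hr q _ _ cq) (rho_keyeq hr q (x ^+ m)%g y cq) K2.
rewrite expg1n !(rhoX hr) ry (rho1 hr).
have hn : omega R p != 0 by rewrite -ry; exact: hr.2.
have term i : b_rho p rho ((y ^+ i)^-1 * x)%g =
    (rho x == omega R p ^+ i : nat)%:Z - (rho x == omega R p ^+ i.+1 : nat)%:Z.
  have ex : rho x = omega R p ^+ i * rho ((y ^+ i)^-1 * x)%g.
    by rewrite -ry -(rhoX hr) -hr.1 mulKVg.
  have nz : omega R p ^+ i != 0 by rewrite expf_neq0.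
  rewrite b_rho_at ex exprSr.
  set r := rho ((y ^+ i)^-1 * x)%g.
  have E1 : (omega R p ^+ i * r == omega R p ^+ i) = (r == 1).
    by rewrite -{2}(mulr1 (omega R p ^+ i)) (inj_eq (mulfI nz)).
  have E2 : (omega R p ^+ i * r == omega R p ^+ i * omega R p) = (r == omega R p).
    by rewrite (inj_eq (mulfI nz)).
  by rewrite E1 E2.
under eq_bigr => i _ do rewrite term.
rewrite -(big_mkord xpredT (fun i => (rho x == omega R p ^+ i : nat)%:Z
   - (rho x == omega R p ^+ i.+1 : nat)%:Z)).
rewrite (telescope_sumr_eq (fun j => - (rho x == omega R p ^+ j : nat)%:Z)) //.
  by rewrite expr0 opprK addrC.
by move=> j _; rewrite opprK addrC.
Qed.
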